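(* Let $P$ be a finite poset. For every $f\in(\mathbb R^+)^P$, $$\rho_{\mathcal B}(f)=\alpha_1\bigl(\alpha_3(\alpha_2(f))\bigr),$$ where the birational maps $\alpha_1,\alpha_2,\alpha_3:(\mathbb R^+)^P\to(\mathbb R^+)^P$ are defined below.
   Context: For a finite poset $P$, let $\widehat P=P\cup\{\hat0,\hat1\}$ with $\hat0<x<\hat1$ for all $x\in P$; write $y\lessdot x$ ($x$ covers $y$) when $y<x$ and no $z$ satisfies $y<z<x$; for $x\in P$ let $x^+=\{y\in\widehat P: y\gtrdot x\}$ and $x^-=\{y\in\widehat P:y\lessdot x\}$. Each $f:P\to\mathbb R^+$ (positive reals) is extended to $\hat f$ on $\widehat P$ by $\hat f(\hat0)=\hat f(\hat1)=1$. The parallel sum of positive reals $s_1,\dots,s_m$ is $s_1\parallel\cdots\parallel s_m=(1/s_1+\cdots+1/s_m)^{-1}$. For $x\in P$ the birational toggle $\tau_x:(\mathbb R^+)^P\to(\mathbb R^+)^P$ leaves $f(y)$ unchanged for $y\neq x$ and sets $(\tau_xf)(x)=\frac{1}{f(x)}\Bigl(\sum_{y\in x^-}\hat f(y)\Bigr)\Bigl(\,\big\|_{y\in x^+}\hat f(y)\Bigr)$. Birational rowmotion is $\rho_{\mathcal B}=\tau_{x_1}\circ\cdots\circ\tau_{x_p}$ for any linear extension $x_1,\dots,x_p$ of $P$ (top elements toggled first; independent of the choice). Define $(\alpha_1 f)(x)=1/f(x)$; $(\alpha_2f)(x)=\big\|_{y\in x^-}\,\bigl(f(x)/\hat f(y)\bigr)$;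 and $\alpha_3 f$ recursively from the top by $(\alpha_3f)(\hat1)=1$ and $(\alpha_3f)(x)=f(x)\sum_{y\in x^+}(\alpha_3f)(y)$ for $x\in P$. *)

(* Defs.v *)
From HB Require Import structures.
From mathcomp Require Import all_boot all_order all_algebra.
Set Implicit Arguments. Unset Strict Implicit. Unset Printing Implicit Defensive.
Import Order.TTheory GRing.Theory Num.Theory.

(* The extended poset \hat P = P + {\hat0, \hat1} is encoded implicitly:
   - a covering pair y <. x inside P is [covby y x];
   - \hat0 is covered by x iff x is minimal in P;
   - x is covered by \hat1 iff x is maximal in P;
   - \hat f(\hat0) = \hat f(\hat1) = 1. *)

Definition covby {d} {P : finPOrderType d} (y x : P) : bool :=
  (y < x)%O && [forall z : P, ~~ ((y < z)%O && (z < x)%O)].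

Definition minimal {d} {P : finPOrderType d} (x : P) : bool :=
  [forall z : P, ~~ (z < x)%O].

Definition maximal {d} {P : finPOrderType d} (x : P) : bool :=
  [forall z : P, ~~ (x < z)%O].

Local Open Scope ring_scope.

Section Defs.
Context {d : Order.disp_t} {P : finPOrderType d} {R : realFieldType}.

Definition down_sum (f : P -> R) (x : P) : R :=
  \sum_(y : P | covby y x) f y + (minimal x)%:R * 1.

Definition up_par (f : P -> R) (x : P) : R :=
  (\sum_(y : P | covby x y) (f y)^-1 + (maximal x)%:R * 1^-1)^-1.

Definition toggle (x : P) (f : P -> R) : P -> R :=
  fun y => if y == x then (f x)^-1 * down_sum f x * up_par f x else f y.

Definition rowmotion_along (s : seq P) (f : P -> R) : P -> R :=
  foldr toggle f s.

Definition linear_extension (s : seq P) : Prop :=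
  perm_eq s (enum P) /\ pairwise (fun a b => ~~ (b < a)%O) s.

Definition alpha1 (f : P -> R) : P -> R := fun x => (f x)^-1.

Definition alpha2 (f : P -> R) : P -> R := fun x =>
  (\sum_(y : P | covby y x) (f x / f y)^-1 + (minimal x)%:R * (f x / 1)^-1)^-1.

(* recursion from the top with fuel: (alpha3 f)(\hat1) = 1,
   (alpha3 f)(x) = f(x) * sum_{y in x^+} (alpha3 f)(y) *)
Fixpoint alpha3_fuel (n : nat) (f : P -> R) (x : P) : R :=
  match n with
  | 0%N => 0
  | n'.+1 => f x * (\sum_(y : P | covby x y) alpha3_fuel n' f y + (maximal x)%:R * 1)
  end.

Definition alpha3 (f : P -> R) : P -> R := alpha3_fuel #|P| f.

End Defs.

(* Main.v *)
Require Import Defs.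
From HB Require Import structures.
From mathcomp Require Import all_boot all_order all_algebra.
Import Order.TTheory GRing.Theory Num.Theory.
Local Open Scope ring_scope.

Section Proof.
Context {d : Order.disp_t} {P : finPOrderType d} {R : realFieldType}.

Lemma fold_notin (f : P -> R) (s : seq P) x :
  x \notin s -> foldr toggle f s x = f x.
Proof.
elim: s => [|a s IH] //=; rewrite in_cons negb_or => /andP[xa xs].
by rewrite /toggle (negbTE xa) IH.
Qed.

Lemma toggle_eq (a : P) (F : P -> R) :
  toggle a F a = (F a)^-1 * down_sum F a * up_par F a.
Proof. by rewrite /toggle eqxx. Qed.

Lemma toggle_neq (a y : P) (F : P -> R) : y != a -> toggle a F y = F y.
Proof. by move=> ya; rewrite /toggle (negbTE ya). Qed.

Lemma fold_key (f : P -> R) (s : seq P) :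
  uniq s -> pairwise (fun a b => ~~ (b < a)%O) s ->
  forall x, x \in s -> foldr toggle f s x =
    (f x)^-1 * down_sum f x * up_par (foldr toggle f s) x.
Proof.
elim: s => [|a s IH] //= /andP[aNs us] /andP[alla ps] x.
have upE : forall z, (forall y, covby z y -> y != a) ->
    up_par (toggle a (foldr toggle f s)) z = up_par (foldr toggle f s) z.
  move=> z H; rewrite /up_par; congr (_ + _)^-1; apply: eq_bigr => y /H ya.
  by rewrite toggle_neq.
rewrite in_cons; case: (eqVneq x a) => [->|xa] /= Hx.
- rewrite toggle_eq fold_notin //.
  have -> : down_sum (foldr toggle f s) a = down_sum f a.
    rewrite /down_sum; congr (_ + _); apply: eq_bigr => y /andP[ya _].
    apply: fold_notin; apply/negP => ys.
    by move/allP: alla => /(_ y ys); rewrite ya.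
  rewrite (upE a) //.
  by move=> y /andP[ay _]; apply/eqP => ya; rewrite ya ltxx in ay.
- rewrite toggle_neq // IH //.
  rewrite (upE x) //.
  move=> y /andP[xy _]; apply/eqP => ya; rewrite ya in xy.
  by move/allP: alla => /(_ x Hx); rewrite xy.
Qed.

Lemma alpha2E (f : P -> R) x : alpha2 f x = f x / down_sum f x.
Proof.
rewrite /alpha2 /down_sum.
under eq_bigr => y _ do rewrite invf_div.
rewrite divr1 -mulr_suml mulr1 -mulrDl.
by rewrite invf_div.
Qed.

Lemma card_up_lt (x y : P) : covby x y ->
  (#|[set z | (y < z)%O]| < #|[set z | (x < z)%O]|)%N.
Proof.
move=> /andP[xy _]; apply: proper_card; apply/properP; split.
  by apply/subsetP => z; rewrite !inE => /(lt_trans xy).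
by exists y; rewrite !inE ?ltxx.
Qed.

Lemma card_up_top (x : P) : (#|[set z | (x < z)%O]| < #|P|)%N.
Proof.
rewrite -cardsT; apply: proper_card; apply/properP; split.
  by apply/subsetP => z; rewrite !inE.
by exists x; rewrite !inE ?ltxx.
Qed.

End Proof.

Theorem theorem3 (d : Order.disp_t) (P : finPOrderType d) (R : realFieldType)
  (f : P -> R) (hf : forall x : P, 0 < f x)
  (s : seq P) (hs : linear_extension s) :
  forall x : P, rowmotion_along s f x = alpha1 (alpha3 (alpha2 f)) x.
Proof.
case: hs => hperm hpw.
set F := rowmotion_along s f.
have key : forall x, F x = (f x)^-1 * down_sum f x * up_par F x.
  move=> x; apply: fold_key => //; first by rewrite (perm_uniq hperm) enum_uniq.
  by rewrite (perm_mem hperm) mem_enum.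
suff H : forall n x, (#|[set z | (x < z)%O]| < n)%N ->
    alpha3_fuel n (alpha2 f) x = (F x)^-1.
  by move=> x; rewrite /alpha1 /alpha3 H ?invrK // card_up_top.
elim=> [|n IH] x //= Hx.
rewrite alpha2E.
have -> : \sum_(y : P | covby x y) alpha3_fuel n (alpha2 f) y =
          \sum_(y : P | covby x y) (F y)^-1.
  apply: eq_bigr => y xy; apply: IH.
  move: (card_up_lt _ _ xy) Hx; rewrite ltnS => h1 h2; exact: (leq_trans h1 h2).
rewrite (key x) /up_par invr1 !invfM !invrK.
by rewrite mulrC mulrA.
Qed.
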